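(* Let $G_1$ and $G_2$ be connected graphs on disjoint vertex sets, let $v_1\in V(G_1)$, $v_2\in V(G_2)$, and let $G$ be the graph with $V(G)=V(G_1)\cup V(G_2)$ and $E(G)=E(G_1)\cup E(G_2)\cup\{v_1v_2\}$. Then \[ \operatorname{cdim}(G)=\begin{cases}\operatorname{cdim}(G_1)+\operatorname{cdim}(G_2)+1 & \text{if both } G_1 \text{ and } G_2 \text{ force an all-ones representation},\\ \operatorname{cdim}(G_1)+\operatorname{cdim}(G_2) & \text{otherwise.}\end{cases} \]
   Context: All graphs are finite, simple, undirected and nonempty. For distinct vertices $v,w$ of a graph $G$, $\kappa_G(v,w)$ is the maximum number of internally vertex-disjoint $v$–$w$ paths in $G$ (an edge $vw$ counts as one such path); $\kappa_G(v,v)=\infty$. For an ordered vertex set $W=(w_1,\ldots,w_k)$, $r_G(v,W)=[\kappa_G(v,w_1),\ldots,\kappa_G(v,w_k)]$. $W$ is resolving for $G$ if $r_G(v_1,W)=r_G(v_2,W)$ implies $v_1=v_2$. A (connectivity) basis is a resolving set of minimum cardinality, and $\operatorname{cdim}(G)$ is its cardinality. A graph $G$ forces an all-ones representation if for every basis $B$ of $G$ there is a vertex $v\in V(G)$ with $r_G(v,B)=[1,\ldots,1]$ (all entries equal to $1$). In particular the one-vertex graph $K_1$, whose only basis is $\emptyset$ and whose vertex has the empty representation vector (vacuously all ones), forces an all-ones representation. *)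

(* Defs.v *)
From Stdlib Require Import ClassicalEpsilon.
From mathcomp Require Import all_boot.
Set Implicit Arguments. Unset Strict Implicit. Unset Printing Implicit Defensive.

Definition pb (P : Prop) : bool :=
  if excluded_middle_informative P then true else false.
Lemma pbP (P : Prop) : reflect P (pb P).
Proof. by rewrite /pb; case: excluded_middle_informative => h; constructor. Qed.

Section Graphs.
Variable T : finType.

Definition simple_graph (e : rel T) := symmetric e /\ irreflexive e.
Definition connected_graph (e : rel T) := forall x y : T, connect e x y.

(* A v-w path: the vertex sequence v :: p, consecutive vertices adjacent,
   ending in w, all vertices distinct. The edge vw is the path [:: w]. *)
Definition vw_path (e : rel T) (v w : T) (p : seq T) : bool :=
  [&& path e v p, last v p == w & uniq (v :: p)].

(* Internal vertices of the path v :: p ending in w are the x in p with x != w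
   (v does not occur in p by uniqueness). Two paths are internally disjoint
   when they share no internal vertex. *)
Definition int_disjoint (w : T) (p q : seq T) : Prop :=
  forall x, x \in p -> x \in q -> x = w.

Definition idp_family (e : rel T) (v w : T) (s : seq (seq T)) : Prop :=
  [/\ uniq s, all (vw_path e v w) s &
      {in s &, forall p q, p != q -> int_disjoint w p q}].

Definition has_idp (e : rel T) (v w : T) (k : nat) : Prop :=
  exists s, idp_family e v w s /\ size s = k.

Lemma has_idp0 e v w : exists k, pb (has_idp e v w k).
Proof.
exists 0; apply/pbP; exists [::]; split => //; split => //.
Qed.

Lemma idp_family_size e v w s : idp_family e v w s -> size s <= #|T|.
Proof.
case=> us /allP ps dis.
have inj : {in s &, injective (head v)}.
  move=> p q ps' qs' hpq.
  have uw (y : T) (r : seq T) : y :: r \in s -> y = w -> y :: r = [:: w].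
    move=> rs hr; move/ps: rs; rewrite hr.
    case/and3P => _ /eqP lw /andP [_ /andP [ynr _]].
    case: r lw ynr => [|z r] //= lw; rewrite -lw.
    by rewrite mem_last.
  case: p q hpq ps' qs' => [|y p] [|z q] //= hyz ps' qs'.
  - by move/ps: qs'; rewrite -hyz /vw_path /= inE eqxx /= !andbF.
  - by move/ps: ps'; rewrite hyz /vw_path /= inE eqxx /= !andbF.
  case: (eqVneq (y :: p) (z :: q)) => // neq.
  have hw : y = w by apply: (dis _ _ ps' qs' neq); rewrite ?inE ?hyz eqxx.
  by rewrite (uw _ _ ps' hw) (uw _ _ qs' (etrans (esym hyz) hw)).
have u : uniq (map (head v) s) by rewrite map_inj_in_uniq.
by rewrite -(size_map (head v)) -(card_uniqP u); apply: max_card.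
Qed.

Lemma has_idp_ub e v w k : pb (has_idp e v w k) -> k <= #|T|.
Proof. by move/pbP => [s [fs <-]]; apply: idp_family_size fs. Qed.

Definition kappa (e : rel T) (v w : T) : nat :=
  ex_maxn (@has_idp0 e v w) (@has_idp_ub e v w).

(* Extended value: None stands for infinity (kappa_G(v,v) = oo). *)
Definition kappa_ext (e : rel T) (v w : T) : option nat :=
  if v == w then None else Some (kappa e v w).

Definition rep (e : rel T) (v : T) (W : seq T) : seq (option nat) :=
  [seq kappa_ext e v w | w <- W].

Definition resolving (e : rel T) (W : seq T) : Prop :=
  uniq W /\ forall x y : T, rep e x W = rep e y W -> x = y.

Lemma resolving_enum e : resolving e (enum T).
Proof.
split; first exact: enum_uniq.
move=> x y /eq_in_map h; have := h x; rewrite mem_enum /kappa_ext eqxx.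
by move=> /(_ isT); case: (eqVneq y x) => [->|].
Qed.

Lemma has_resolving e : exists n, pb (exists W, resolving e W /\ size W = n).
Proof. by exists (size (enum T)); apply/pbP; exists (enum T); split => //; apply: resolving_enum. Qed.

Definition cdim (e : rel T) : nat := ex_minn (has_resolving e).

Definition basis (e : rel T) (B : seq T) : Prop :=
  resolving e B /\ size B = cdim e.

Definition forces_all_ones (e : rel T) : Prop :=
  forall B, basis e B -> exists v : T, rep e v B = nseq (size B) (Some 1).

End Graphs.

Definition bridge_graph (T1 T2 : finType) (e1 : rel T1) (e2 : rel T2)
  (v1 : T1) (v2 : T2) : rel (T1 + T2) :=
  fun x y => match x, y with
  | inl a, inl b => e1 a b
  | inr a, inr b => e2 a b
  | inl a, inr b => (a == v1) && (b == v2)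
  | inr a, inl b => (a == v2) && (b == v1)
  end.

(* Main.v *)
From Stdlib Require Import Classical.
Require Import Defs.
From mathcomp Require Import all_boot zify.
Set Implicit Arguments. Unset Strict Implicit. Unset Printing Implicit Defensive.

Lemma all_last (T : Type) (P : pred T) x p : all P p -> P x -> P (last x p).
Proof. by elim: p x => //= y p IH x /andP[Py Pp] _; apply: IH. Qed.

Section Sep.
Variables (T : finType) (e : rel T) (S : pred T) (u u' : T).
Hypothesis uS : S u.
Hypothesis u'S : ~~ S u'.
Hypothesis crossO : forall x y, e x y -> S x -> ~~ S y -> x = u /\ y = u'.
Hypothesis crossI : forall x y, e x y -> ~~ S x -> S y -> x = u' /\ y = u.

Lemma stay_out p x : ~~ S x -> u \notin p -> path e x p -> all (predC S) p.
Proof.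
elim: p x => //= y p IH x Sx; rewrite inE negb_or => /andP[uy up] /andP[exy pp].
case Sy: (S y).
  by have [_ ey] := crossI exy Sx Sy; rewrite ey eqxx in uy.
apply/andP; split; first by rewrite /= ?Sy.
by apply: (IH y) => //; rewrite Sy.
Qed.

Lemma stay_in p x : S x -> uniq (x :: p) -> path e x p -> S (last x p) -> all S p.
Proof.
elim: p x => //= y p IH x Sx /andP[xnin up] /andP[exy pp] Sl.
case Sy: (S y); first by rewrite (IH y).
have [ex ey] := crossO exy Sx (negbT Sy); subst x y.
have h : all (predC S) p.
  by apply: (stay_out (negbT Sy)) => //; move: xnin; rewrite inE negb_or => /andP[].
by have := all_last (x:=u') h u'S; rewrite /= Sl.
Qed.

Lemma cross_mem p x : S x -> path e x p -> ~~ S (last x p) -> u \in x :: p /\ u' \in p.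
Proof.
elim: p x => [|y p IH] x Sx /=; first by rewrite Sx.
move=> /andP[exy pp] Sl; case Sy: (S y).
  have [h1 h2] := IH y Sy pp Sl.
  by split; rewrite inE ?h1 ?h2 orbT.
have [-> ->] := crossO exy Sx (negbT Sy).
by rewrite !inE !eqxx.
Qed.

Lemma single p : path e u p -> last u p = u' -> uniq (u :: p) -> p = [:: u'].
Proof.
case: p => [|z p] /=; first by move=> _ h; move: u'S; rewrite -h uS.
move=> /andP[euz pp] hl /andP[un /andP[zn up]].
case Sz: (S z).
  have Sl : ~~ S (last z p) by rewrite hl.
  have [h1 _] := cross_mem Sz pp Sl.
  by rewrite h1 in un.
have [_ ez] := crossO euz uS (negbT Sz); subst z.
case: p pp hl zn up un => [|w p] //= _ hl.
by rewrite -hl (mem_last w p).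
Qed.

Lemma kappa1 x y : S x -> ~~ S y -> connect e x y -> kappa e x y = 1.
Proof.
move=> Sx Sy cxy; rewrite /kappa; case: ex_maxnP => k hk ub.
apply/eqP; rewrite eqn_leq; apply/andP; split.
  move/pbP: hk => [s [[us /allP ps dis] <-]].
  case: s us ps dis => [|p [|q s]] //= us ps dis; exfalso.
  have pp : p \in [:: p, q & s] by rewrite mem_head.
  have qq : q \in [:: p, q & s] by rewrite !inE eqxx orbT.
  have pq : p != q by move: us; rewrite inE negb_or => /andP[/andP[]].
  have dpq := dis p q pp qq pq.
  move: (ps p pp) (ps q qq) => /and3P[pa /eqP la ua] /and3P[qa /eqP lb ub'].
  have Sla : ~~ S (last x p) by rewrite la.
  have Slb : ~~ S (last x q) by rewrite lb.
  have [up1 up2] := cross_mem Sx pa Sla.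
  have [uq1 uq2] := cross_mem Sx qa Slb.
  case: (eqVneq y u') => [yu'|yu']; last first.
    by move: yu'; rewrite -(dpq _ up2 uq2) eqxx.
  case: (eqVneq x u) => [xu|xu]; last first.
    move: up1 uq1; rewrite !inE eq_sym (negbTE xu) /= => h1 h2.
    by move: u'S; rewrite -yu' -(dpq _ h1 h2) uS.
  rewrite xu in pa ua; rewrite xu yu' in lb; rewrite xu yu' in la; rewrite xu in qa ub'.
  rewrite (single pa la ua) (single qa lb ub') in pq.
  by rewrite eqxx in pq.
apply: ub; apply/pbP.
case/connectP: cxy => p pp ->.
case: (shortenP pp) => p' pp' up' _.
exists [:: p']; split => //; split => //=.
  by rewrite /vw_path pp' eqxx up'.
by move=> a b; rewrite !inE => /eqP -> /eqP ->; rewrite eqxx.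
Qed.

End Sep.

Lemma kappa_eq (T T' : finType) (e : rel T) (e' : rel T') x y x' y' :
  (forall k, has_idp e x y k <-> has_idp e' x' y' k) -> kappa e x y = kappa e' x' y'.
Proof.
move=> h; rewrite /kappa; case: ex_maxnP => i hi ubi; case: ex_maxnP => j hj ubj.
apply/eqP; rewrite eqn_leq; apply/andP; split.
  by apply: ubj; apply/pbP; apply/h; apply/pbP.
by apply: ubi; apply/pbP; apply/h; apply/pbP.
Qed.

Section Emb.
Variables (T T' : finType) (e : rel T) (e' : rel T') (f : T' -> T) (g : T -> option T')
  (S : pred T).
Hypothesis fK : pcancel f g.
Hypothesis ef : forall x y, e (f x) (f y) = e' x y.
Hypothesis Sf : forall x, S (f x).
Hypothesis gS : forall z, S z -> omap f (g z) = Some z.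
Hypothesis stay : forall x p, S x -> uniq (x :: p) -> path e x p -> S (last x p) -> all S p.

Let finj : injective f := pcan_inj fK.

Lemma path_emb x p : path e (f x) (map f p) = path e' x p.
Proof. by elim: p x => //= y p IH x; rewrite ef IH. Qed.

Lemma vw_emb a b p : vw_path e (f a) (f b) (map f p) = vw_path e' a b p.
Proof.
by rewrite /vw_path path_emb last_map (inj_eq finj) -map_cons (map_inj_uniq finj).
Qed.

Lemma fam_emb a b s : idp_family e (f a) (f b) (map (map f) s) <-> idp_family e' a b s.
Proof.
split.
  case=> us as' dis; split.
  - by rewrite (map_inj_uniq (inj_map finj)) in us.
  - by rewrite all_map (eq_all (@vw_emb a b)) in as'.
  move=> p q ps qs pq x xp xq; apply: finj.
  apply: (dis (map f p) (map f q)); rewrite ?map_f //.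
  by rewrite (inj_eq (inj_map finj)).
case=> us as' dis; split.
- by rewrite (map_inj_uniq (inj_map finj)).
- by rewrite all_map (eq_all (@vw_emb a b)).
move=> p' q' /mapP[p ps ->] /mapP[q qs ->] pq z /mapP[x xp ->] xq.
rewrite (mem_map finj) in xq.
have pq' : p != q by apply: contraNneq pq => ->.
by rewrite (dis p q ps qs pq' x xp xq).
Qed.

Lemma pmap_emb p : all S p -> map f (pmap g p) = p.
Proof.
elim: p => //= z p IH /andP[Sz Sp].
have := gS Sz; case: (g z) => //= x [<-].
by rewrite /= IH.
Qed.

Lemma has_idp_emb a b k : has_idp e (f a) (f b) k <-> has_idp e' a b k.
Proof.
split.
  move=> [s [fs sz]]; exists (map (pmap g) s); split; last by rewrite size_map.
  apply/(fam_emb a b).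
  rewrite -map_comp map_id_in //.
  move=> p ps /=; apply: pmap_emb.
  case: fs => _ /allP h _; case/and3P: (h p ps) => pp /eqP lp up.
  by apply: (stay (Sf a) up pp); rewrite lp.
move=> [s [fs sz]]; exists (map (map f) s); split; last by rewrite size_map.
exact/fam_emb.
Qed.

Lemma kappa_emb a b : kappa e (f a) (f b) = kappa e' a b.
Proof. by apply: kappa_eq => k; apply: has_idp_emb. Qed.

Lemma connect_emb a b : connect e' a b -> connect e (f a) (f b).
Proof.
case/connectP => p pp ->; apply/connectP; exists (map f p).
  by rewrite path_emb.
by rewrite last_map.
Qed.

End Emb.

Lemma cdim_le (T : finType) (e : rel T) W : resolving e W -> cdim e <= size W.
Proof. by move=> r; rewrite /cdim; case: ex_minnP => m _ h; apply: h; apply/pbP; exists W. Qed.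

Lemma cdim_ex (T : finType) (e : rel T) : exists W, basis e W.
Proof.
rewrite /basis /cdim; case: ex_minnP => m hm _.
by move/pbP: hm => [W [r s]]; exists W.
Qed.

Lemma not_forces (T : finType) (e : rel T) : ~ forces_all_ones e ->
  exists B, basis e B /\ forall v, rep e v B <> nseq (size B) (Some 1).
Proof.
move=> nf; apply: NNPP => h; apply: nf => B bB; apply: NNPP => h2; apply: h.
by exists B; split=> // v hv; apply: h2; exists v.
Qed.

Definition getl (A B : Type) (z : A + B) : option A := if z is inl a then Some a else None.
Definition getr (A B : Type) (z : A + B) : option B := if z is inr b then Some b else None.
Definition isl (A B : Type) (z : A + B) : bool := if z is inl _ then true else false.
Definition isr (A B : Type) (z : A + B) : bool := if z is inr _ then true else false.

Section Bridge.
Variables (T1 T2 : finType) (e1 : rel T1) (e2 : rel T2) (v1 : T1) (v2 : T2).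
Hypothesis c1 : connected_graph e1.
Hypothesis c2 : connected_graph e2.
Local Notation G := (bridge_graph e1 e2 v1 v2).
Local Notation ones := (pred1 (Some 1)).

Lemma crossOl x y : G x y -> isl x -> ~~ isl y -> x = inl v1 /\ y = inr v2.
Proof. by case: x y => a [b|b] //= /andP[/eqP-> /eqP->]. Qed.
Lemma crossIl x y : G x y -> ~~ isl x -> isl y -> x = inr v2 /\ y = inl v1.
Proof. by case: x y => a [b|b] //= /andP[/eqP-> /eqP->]. Qed.
Lemma crossOr x y : G x y -> isr x -> ~~ isr y -> x = inr v2 /\ y = inl v1.
Proof. by case: x y => a [b|b] //= /andP[/eqP-> /eqP->]. Qed.
Lemma crossIr x y : G x y -> ~~ isr x -> isr y -> x = inl v1 /\ y = inr v2.
Proof. by case: x y => a [b|b] //= /andP[/eqP-> /eqP->]. Qed.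

Lemma stayl x p : isl x -> uniq (x :: p) -> path G x p -> isl (last x p) -> all (@isl T1 T2) p.
Proof. by apply: (stay_in (S := @isl T1 T2) (u:=inl v1) (u':=inr v2)) => //; [apply: crossOl|apply: crossIl]. Qed.
Lemma stayr x p : isr x -> uniq (x :: p) -> path G x p -> isr (last x p) -> all (@isr T1 T2) p.
Proof. by apply: (stay_in (S := @isr T1 T2) (u:=inr v2) (u':=inl v1)) => //; [apply: crossOr|apply: crossIr]. Qed.

Lemma K_ll a b : kappa G (inl a) (inl b) = kappa e1 a b.
Proof.
apply: (kappa_emb (g := @getl T1 T2) (S := @isl T1 T2)) => //.
  by case.
exact: stayl.
Qed.

Lemma K_rr a b : kappa G (inr a) (inr b) = kappa e2 a b.
Proof.
apply: (kappa_emb (g := @getr T1 T2) (S := @isr T1 T2)) => //.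
  by case.
exact: stayr.
Qed.

Lemma conn_l a b : connect G (inl a) (inl b).
Proof. by apply: (connect_emb (e' := e1)) => //; apply: c1. Qed.
Lemma conn_r a b : connect G (inr a) (inr b).
Proof. by apply: (connect_emb (e' := e2)) => //; apply: c2. Qed.

Lemma K_lr a b : kappa G (inl a) (inr b) = 1.
Proof.
apply: (@kappa1 _ G (@isl T1 T2) (inl v1) (inr v2) isT isT (@crossOl)) => //.
apply: connect_trans (conn_l a v1) _; apply: connect_trans (conn_r v2 b).
by apply: connect1; rewrite /= !eqxx.
Qed.

Lemma K_rl a b : kappa G (inr b) (inl a) = 1.
Proof.
apply: (@kappa1 _ G (@isr T1 T2) (inr v2) (inl v1) isT isT (@crossOr)) => //.
apply: connect_trans (conn_r b v2) _; apply: connect_trans (conn_l v1 a).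
by apply: connect1; rewrite /= !eqxx.
Qed.

Definition kl x (z : T1 + T2) := match z with inl a => kappa_ext e1 x a | inr _ => Some 1 end.
Definition kr y (z : T1 + T2) := match z with inl _ => Some 1 | inr b => kappa_ext e2 y b end.

Lemma rep_l x W : rep G (inl x) W = map (kl x) W.
Proof.
apply: eq_map => -[a|b]; rewrite /kl /kr /kappa_ext /=.
  have -> : (@inl T1 T2 x == inl a) = (x == a) by apply/eqP/eqP => [[->]|->].
  by case: eqP => // _; rewrite K_ll.
by rewrite K_lr.
Qed.

Lemma rep_r y W : rep G (inr y) W = map (kr y) W.
Proof.
apply: eq_map => -[a|b]; rewrite /kl /kr /kappa_ext /=.
  by rewrite K_rl.
have -> : (@inr T1 T2 y == inr b) = (y == b) by apply/eqP/eqP => [[->]|->].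
by case: eqP => // _; rewrite K_rr.
Qed.

Lemma eq_rep_l x y W : rep G (inl x) W = rep G (inl y) W <->
  rep e1 x (pmap (@getl _ _) W) = rep e1 y (pmap (@getl _ _) W).
Proof.
rewrite !rep_l; elim: W => //= -[a|b] W IH /=; split.
- by case=> -> /IH ->.
- by case=> -> /IH ->.
- by case=> /IH ->.
- by move/IH ->.
Qed.

Lemma eq_rep_r x y W : rep G (inr x) W = rep G (inr y) W <->
  rep e2 x (pmap (@getr _ _) W) = rep e2 y (pmap (@getr _ _) W).
Proof.
rewrite !rep_r; elim: W => //= -[a|b] W IH /=; split.
- by case=> /IH ->.
- by move/IH ->.
- by case=> -> /IH ->.
- by case=> -> /IH ->.
Qed.

Lemma ones_l x W : all ones (rep G (inl x) W) = all ones (rep e1 x (pmap (@getl _ _) W)).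
Proof. by rewrite rep_l; elim: W => //= -[a|b] W IH /=; rewrite IH. Qed.
Lemma ones_r y W : all ones (rep G (inr y) W) = all ones (rep e2 y (pmap (@getr _ _) W)).
Proof. by rewrite rep_r; elim: W => //= -[a|b] W IH /=; rewrite IH. Qed.

Lemma cross_eq x y W : rep G (inl x) W = rep G (inr y) W ->
  all ones (rep e1 x (pmap (@getl _ _) W)) && all ones (rep e2 y (pmap (@getr _ _) W)).
Proof.
rewrite rep_l rep_r; elim: W => //= -[a|b] W IH /= [h1 /IH h2].
  by rewrite h1 eqxx.
by rewrite -h1 eqxx.
Qed.

Lemma size_split W : size W = size (pmap (@getl T1 T2) W) + size (pmap (@getr T1 T2) W).
Proof. by elim: W => //= -[a|b] W IH /=; rewrite IH ?addSn ?addnS. Qed.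

Lemma rep_ones (T : finType) (e : rel T) v B :
  all ones (rep e v B) -> rep e v B = nseq (size B) (Some 1).
Proof. by move/all_pred1P; rewrite size_map. Qed.

Lemma lower : cdim e1 + cdim e2 <= cdim G /\
  (forces_all_ones e1 -> forces_all_ones e2 -> cdim e1 + cdim e2 < cdim G).
Proof.
have [W [[uW rW] sW]] := cdim_ex G.
have r1 : resolving e1 (pmap (@getl _ _) W).
  split; first by apply: (pmap_uniq (g := inl)) => // -[].
  by move=> x y /eq_rep_l /rW [].
have r2 : resolving e2 (pmap (@getr _ _) W).
  split; first by apply: (pmap_uniq (g := inr)) => // -[].
  by move=> x y /eq_rep_r /rW [].
have l1 : cdim e1 <= size (pmap (@getl T1 T2) W) := cdim_le r1.
have l2 : cdim e2 <= size (pmap (@getr T1 T2) W) := cdim_le r2.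
have sz := size_split W.
split; first by rewrite -sW sz leq_add.
move=> f1 f2; rewrite ltnNge; apply/negP => hle.
rewrite -sW sz in hle.
have b1 : basis e1 (pmap (@getl T1 T2) W) by split => //; lia.
have b2 : basis e2 (pmap (@getr T1 T2) W) by split => //; lia.
have [x0 hx] := f1 _ b1; have [y0 hy] := f2 _ b2.
have h1 : all ones (rep G (inl x0) W) by rewrite ones_l hx; apply/all_pred1P; rewrite size_nseq.
have h2 : all ones (rep G (inr y0) W) by rewrite ones_r hy; apply/all_pred1P; rewrite size_nseq.
by have [] := rW _ _ (etrans (rep_ones h1) (esym (rep_ones h2))).
Qed.

Lemma pmap_ll (s : seq T1) : pmap (@getl T1 T2) (map inl s) = s.
Proof. by elim: s => //= a s ->. Qed.
Lemma pmap_lr (s : seq T2) : pmap (@getl T1 T2) (map inr s) = [::].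
Proof. by elim: s. Qed.
Lemma pmap_rl (s : seq T1) : pmap (@getr T1 T2) (map inl s) = [::].
Proof. by elim: s. Qed.
Lemma pmap_rr (s : seq T2) : pmap (@getr T1 T2) (map inr s) = s.
Proof. by elim: s => //= a s ->. Qed.

Lemma resolve_cat B1 B2 : resolving e1 B1 -> resolving e2 B2 ->
  (forall x y, all ones (rep e1 x B1) -> all ones (rep e2 y B2) -> False) ->
  resolving G (map inl B1 ++ map inr B2).
Proof.
move=> [u1 r1] [u2 r2] P; split.
  have il : injective (@inl T1 T2) by move=> a b [].
  have ir : injective (@inr T1 T2) by move=> a b [].
  rewrite cat_uniq (map_inj_uniq il) (map_inj_uniq ir) u1 u2 /= andbT.
  apply/hasPn => z /mapP[b _ ->]; apply/mapP => -[a _] //.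
have el : pmap (@getl _ _) (map inl B1 ++ map inr B2) = B1 by rewrite pmap_cat pmap_ll pmap_lr cats0.
have er : pmap (@getr _ _) (map inl B1 ++ map inr B2) = B2 by rewrite pmap_cat pmap_rl pmap_rr.
move=> [x|x] [y|y] h.
- by move/eq_rep_l: h; rewrite el => /r1 ->.
- by have /andP[] := cross_eq h; rewrite el er; move/P => H /H.
- by have /andP[] := cross_eq (esym h); rewrite el er; move/P => H /H.
- by move/eq_rep_r: h; rewrite er => /r2 ->.
Qed.

Lemma upper0 : (exists B1, basis e1 B1 /\ forall v, rep e1 v B1 <> nseq (size B1) (Some 1)) \/
               (exists B2, basis e2 B2 /\ forall v, rep e2 v B2 <> nseq (size B2) (Some 1)) ->
  cdim G <= cdim e1 + cdim e2.
Proof.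
case=> [[B1 [[r1 s1] n1]]|[B2 [[r2 s2] n2]]].
  have [B2 [r2 s2]] := cdim_ex e2.
  have := cdim_le (@resolve_cat B1 B2 r1 r2 _); rewrite size_cat !size_map s1 s2; apply.
  by move=> x y /rep_ones /n1.
have [B1 [r1 s1]] := cdim_ex e1.
have := cdim_le (@resolve_cat B1 B2 r1 r2 _); rewrite size_cat !size_map s1 s2; apply.
by move=> x y _ /rep_ones /n2.
Qed.

Lemma upper1 : forces_all_ones e1 -> cdim G <= cdim e1 + cdim e2 + 1.
Proof.
move=> f1.
have [B1 b1] := cdim_ex e1; have [B2 [r2 s2]] := cdim_ex e2.
have [x0 hx] := f1 _ b1; case: b1 => -[u1 r1] s1.
have x0B : x0 \notin B1.
  apply/negP => xB; have : kappa_ext e1 x0 x0 \in rep e1 x0 B1 by apply: map_f.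
  by rewrite hx /kappa_ext eqxx => /nseqP [].
have r1' : resolving e1 (x0 :: B1).
  split; first by rewrite /= x0B u1.
  by move=> x y [_ /r1].
have := cdim_le (@resolve_cat (x0 :: B1) B2 r1' r2 _).
  rewrite size_cat !size_map /= s1 s2 addSn addn1; apply.
move=> x y /= /andP[/eqP k1 a1] _.
have := r1 _ _ (etrans (rep_ones a1) (esym hx)) => ex.
by move: k1; rewrite ex /kappa_ext eqxx.
Qed.

End Bridge.

Theorem mainTheorem11 (T1 T2 : finType) (e1 : rel T1) (e2 : rel T2)
  (v1 : T1) (v2 : T2) :
  simple_graph e1 -> simple_graph e2 ->
  connected_graph e1 -> connected_graph e2 ->
  (forces_all_ones e1 /\ forces_all_ones e2 ->
     cdim (bridge_graph e1 e2 v1 v2) = cdim e1 + cdim e2 + 1) /\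
  (~ (forces_all_ones e1 /\ forces_all_ones e2) ->
     cdim (bridge_graph e1 e2 v1 v2) = cdim e1 + cdim e2).
Proof.
move=> _ _ c1 c2.
have [lo lo1] := @lower T1 T2 e1 e2 v1 v2 c1 c2.
split.
  case=> f1 f2; apply/eqP; rewrite eqn_leq upper1 //=.
  by rewrite addn1; apply: lo1.
move=> nf; apply/eqP; rewrite eqn_leq lo andbT.
apply: upper0 => //.
case: (classic (forces_all_ones e1)) => h1.
  case: (classic (forces_all_ones e2)) => h2; first by exfalso; apply: nf.
  by right; apply: not_forces.
by left; apply: not_forces.
Qed.
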